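(* Fix a node $\ell$ and the other nodes' probabilities $\mathbf{P}_{-\ell}\in[0,1]^{N-1}$, and write $\beta_\ell=e^{-\rho_{\ell2}}\prod_{k\neq\ell}(1-p_k)$. Let $p_\ell(1)\in[p_\ell^{min},1]$ and let $(v_\ell(t))_{t\ge1}$ be random variables such that, with $$p_\ell(t+1)=\max\{p_\ell^{min},\,p_\ell(t)+\kappa(t)v_\ell(t)\},$$ one has for all $t$: $|v_\ell(t)|\le M$ for a constant $M<\infty$, $v_\ell(t)\le 1-p_\ell(t)$, and $$\mathbb{E}\{v_\ell(t)\mid p_\ell(1),\dots,p_\ell(t)\}=e^{-\alpha_\ell p_\ell(t)}-p_\ell(t)\beta_\ell-p_\ell(t).$$ If the deterministic learning rates satisfy $\kappa(t)\in(0,1]$ for all $t$, $\sum_{t}\kappa(t)=\infty$ and $\sum_t\kappa(t)^2<\infty$, then $p_\ell(t)$ converges almost surely to the best response $p_\ell^{br}=\arg\max_{p\in[p_\ell^{min},1]}U_\ell(p;\mathbf{P}_{-\ell})$.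
   Context: Game $\mathcal{G}$: node $\ell$ has parameters $c_\ell>0$, $\rho_{\ell1}>0$, $\rho_{\ell2}>0$, $p_\ell^{min}\in(0,1)$, $\alpha_\ell=c_\ell\rho_{\ell1}$, and virtual utility $$U_\ell(p_\ell;\mathbf{P}_{-\ell})=-\frac{e^{-\alpha_\ell p_\ell}}{\alpha_\ell}-\frac{p_\ell^2}{2}\Big(1+e^{-\rho_{\ell2}}\prod_{k\ne\ell}(1-p_k)\Big)+\frac{1+\alpha_\ell}{\alpha_\ell}.$$ In the paper's learning algorithm, $v_\ell(t)=e^{-\rho_{\ell1}C_\ell^{av}(t)}-\frac{1}{(1+\Delta_\ell^{av}(t))e^{\rho_{\ell2}}}-p_\ell(t)$, where $C_\ell^{av}(t)$ and $\Delta_\ell^{av}(t)$ are node $\ell$'s empirical average transmission cost and empirical time-averaged age over frame $t$; the conditional-expectation hypothesis above is the idealization of this (large frame length) used in the paper. *)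

(* Defs.v *)
From HB Require Import structures.
From mathcomp Require Import all_boot all_order all_algebra.
From mathcomp Require Import all_classical all_reals all_analysis.
Set Implicit Arguments. Unset Strict Implicit. Unset Printing Implicit Defensive.
Import Order.TTheory GRing.Theory Num.Theory numFieldNormedType.Exports.
Local Open Scope ring_scope.

Definition beta_l (R : realType) (N : nat) (l : 'I_N) (P : 'I_N -> R) (rho2 : R) : R :=
  expR (- rho2) * \prod_(k < N | k != l) (1 - P k).

Definition U_l (R : realType) (N : nat) (l : 'I_N) (P : 'I_N -> R)
  (c rho1 rho2 : R) (p : R) : R :=
  let alpha := c * rho1 in
  - expR (- alpha * p) / alpha
  - (p ^+ 2 / 2) * (1 + beta_l l P rho2)
  + (1 + alpha) / alpha.

(* the learning iterates; index t = 0 here is the paper's t = 1 *)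
Fixpoint proc (R : realType) (T : Type) (pmin : R) (p1 : T -> R)
  (kappa : nat -> R) (v : nat -> T -> R) (t : nat) : T -> R :=
  match t with
  | 0 => p1
  | t'.+1 => fun w => Num.max pmin (proc pmin p1 kappa v t' w + kappa t' * v t' w)
  end.

(* Main.v *)
Require Import Defs.
From HB Require Import structures.
From mathcomp Require Import all_boot all_order all_algebra.
From mathcomp Require Import all_classical all_reals all_analysis.
From mathcomp Require Import ring lra measurable_realfun.
Import Order.TTheory GRing.Theory Num.Theory numFieldNormedType.Exports.
Local Open Scope classical_set_scope.
Local Open Scope ring_scope.

Section Det.
Variable R : realType.

Lemma clip_le (pmin pbr z : R) : pmin <= pbr ->
  (Num.max pmin z - pbr) ^+ 2 <= (z - pbr) ^+ 2.
Proof.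
move=> hp; case: (leP pmin z) => hz.
  by [].
rewrite !expr2; nra.
Qed.

Lemma var_ineq (a b r : R) (E : R -> R) (f : R -> R) (U : R -> R)
  (pmin : R) :
  0 < a -> 0 <= b -> 0 <= pmin -> pmin <= r <= 1 ->
  (forall x, E x = expR (- a * x)) ->
  (forall x, f x = E x - x * b - x) ->
  (forall x, U x = - E x / a - (x ^+ 2 / 2) * (1 + b) + (1 + a) / a) ->
  (forall x, pmin <= x <= 1 -> U x <= U r) ->
  forall x, pmin <= x <= 1 -> f r * (x - r) <= 0.
Proof.
move=> a0 b0 pm0 /andP[pr r1] hE hf hU hmax x /andP[px x1].
have Er1 : E r <= 1 by rewrite hE expR_le1; nra.
have Er0 : 0 < E r by rewrite hE expR_gt0.
have key : forall h, a * (U (r + h) - U r) =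
    E r - E (r + h) - a * (1 + b) * (2 * r * h + h ^+ 2) / 2.
  move=> h; rewrite !hU; field; exact: lt0r_neq0.
have Eh : forall h, E (r + h) = E r * expR (- a * h).
  by move=> h; rewrite !hE -expRD; congr expR; ring.
rewrite leNgt; apply/negP => hpos.
have [xr|xr] := ltP r x.
- have fr : 0 < f r by nra.
  set h := Num.min (x - r) (f r / (2 * (a + 1 + b))).
  have h0 : 0 < h by rewrite lt_min subr_gt0 xr /=; apply: divr_gt0 => //; nra.
  have hle1 : h <= x - r by rewrite ge_min lexx.
  have hle2 : h * (2 * (a + 1 + b)) <= f r.
    by rewrite -ler_pdivlMr ?ge_min ?lexx ?orbT //; nra.
  have := hmax (r + h); rewrite (_ : pmin <= r + h <= 1 = true); last first.
    by apply/andP; split; nra.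
  move=> /(_ isT) hU2.
  set s := expR (- a * h).
  have s1 : s * (1 + a * h) <= 1.
    have := expR_ge1Dx (a * h); rewrite /s => h1.
    have : expR (- a * h) * expR (a * h) = 1 by rewrite -expRD; rewrite (_ : - a * h + a * h = 0) ?expR0 //; ring.
    have := expR_gt0 (- a * h); nra.
  have s2 : 1 - a * h <= s.
    have := expR_ge1Dx (- a * h); rewrite /s; nra.
  have s0 : 0 < s by rewrite /s expR_gt0.
  have := key h; rewrite Eh -/s => kh.
  have : 0 < a * (U (r + h) - U r).
    rewrite kh.
    have fe : f r = E r - r * b - r by rewrite hf.
    have ah0 : 0 <= a * h by nra.
    have t1 : 1 - s >= s * (a * h) by nra.
    have t2 : s * (a * h) >= (1 - a * h) * (a * h) by nra.
    have : E r * (1 - s) >= E r * ((1 - a * h) * (a * h)) by apply: ler_wpM2l; nra.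
    have q0 : 0 < f r - E r * a * h - (1 + b) * h / 2.
      have : E r * a * h <= a * h by nra.
      nra.
    have : 0 < (a * h) * (f r - E r * a * h - (1 + b) * h / 2) by apply: mulr_gt0; nra.
    rewrite fe; nra.
  nra.
- have xr' : x < r.
    rewrite lt_neqAle xr andbT; apply/negP => /eqP xe; move: hpos; rewrite xe subrr mulr0 ltxx //.
  have fr : f r < 0 by nra.
  set h := Num.min (Num.min (r - x) (- f r / (2 * (2 * a + 1 + b)))) (1 / (2 * a)).
  have h0 : 0 < h.
    rewrite !lt_min subr_gt0 xr' /=; apply/andP; split; apply: divr_gt0 => //; nra.
  have hle1 : h <= r - x by rewrite /h !ge_min lexx.
  have hle2 : h * (2 * (2 * a + 1 + b)) <= - f r.
    rewrite -ler_pdivlMr; last nra.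
    by rewrite /h !ge_min lexx orbT.
  have hle3 : h * (2 * a) <= 1.
    rewrite -ler_pdivlMr; last nra.
    by rewrite /h !ge_min lexx orbT.
  have := hmax (r + - h); rewrite (_ : pmin <= r + - h <= 1 = true); last first.
    by apply/andP; split; nra.
  move=> /(_ isT) hU2.
  set s := expR (- a * - h).
  have s1 : s * (1 - a * h) <= 1.
    have := expR_ge1Dx (- a * h); rewrite /s => h1.
    have : expR (- a * - h) * expR (- a * h) = 1 by rewrite -expRD; rewrite (_ : - a * - h + - a * h = 0) ?expR0 //; ring.
    have := expR_gt0 (- a * - h); nra.
  have s2 : 1 + a * h <= s.
    have := expR_ge1Dx (a * h); rewrite /s (_ : - a * - h = a * h) //; ring.
  have s0 : 0 < s by rewrite /s expR_gt0.
  have sle2 : s <= 2 by nra.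
  have := key (- h); rewrite Eh -/s => kh.
  have : 0 < a * (U (r + - h) - U r).
    rewrite kh.
    have fe : f r = E r - r * b - r by rewrite hf.
    have ah0 : 0 <= a * h by nra.
    have t1 : 1 - s >= - (s * (a * h)) by nra.
    have t3 : E r * (1 - s) >= E r * (- (s * (a * h))) by apply: ler_wpM2l; nra.
    have t4 : E r * (s - 1) <= s - 1 by nra.
    have q0 : 0 < - f r - E r * (s - 1) - (1 + b) * h / 2 by nra.
    have : 0 < (a * h) * (- f r - E r * (s - 1) - (1 + b) * h / 2) by apply: mulr_gt0; nra.
    rewrite fe; nra.
  nra.
Qed.

Lemma count_bnd (h x : R) m : 0 < h -> 0 <= x ->
  let S := \sum_(k < m) (if k.+1%:R * h <= x then 1 else 0 : R) in
  [/\ S <= m%:R, h * S <= x & (x - h <= h * S \/ S = m%:R)].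
Proof.
move=> h0 x0; elim: m => [|m IH] /=.
  rewrite big_ord0 mulr0; split => //; by right.
move: IH => [S1 S2 S3]; rewrite big_ord_recr /=.
set S := \sum_(_ < _) _ in S1 S2 S3 *.
rewrite -[m.+1]addn1 natrD.
case: ifP => hm.
- split; first lra.
  + have : h * S <= h * m%:R by apply: ler_wpM2l => //; lra.
    rewrite mulrDr mulr1; rewrite mulrDl mul1r in hm.
    have : m%:R * h = h * m%:R by rewrite mulrC.
    lra.
  + case: S3 => S3; first by left; rewrite mulrDr mulr1; lra.
    by right; rewrite S3.
- move/negbT: hm; rewrite -ltNge => hm.
  split; first lra.
  + by rewrite addr0.
  + left; rewrite addr0; case: S3 => // ->; rewrite mulrC; lra.
Qed.

End Det.

Section Main.
Variables (R : realType) (d : measure_display) (T : measurableType d)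
  (Pr : probability T R)
  (N : nat) (l : 'I_N) (P : 'I_N -> R) (c rho1 rho2 pmin M : R)
  (p1 : T -> R) (v : nat -> T -> R) (kappa : nat -> R).
Hypotheses (c0 : 0 < c) (r10 : 0 < rho1) (r20 : 0 < rho2) (hpmin : 0 < pmin < 1)
  (hP : forall k, k != l -> 0 <= P k <= 1)
  (mp1 : measurable_fun setT p1)
  (hp1 : forall w, pmin <= p1 w <= 1)
  (mv : forall t, measurable_fun setT (v t))
  (hvM : forall t w, `|v t w| <= M)
  (hv1 : forall t w, v t w <= 1 - proc pmin p1 kappa v t w)
  (hk : forall t, 0 < kappa t <= 1).

Let p t := proc pmin p1 kappa v t.
Let G t := g_sigma_preimage (fun i : 'I_t.+1 => proc pmin p1 kappa v i).

Lemma p_bnd t w : pmin <= p t w <= 1.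
Proof.
elim: t w => [|t IH] w; first exact: hp1.
rewrite /p /=; have /andP[h1 h2] := IH w; have /andP[k0 k1] := hk t.
have := hv1 t w; rewrite -/(p t) => hv.
case/andP: hpmin => hm0 hm1.
apply/andP; split; first by rewrite le_max lexx.
rewrite ge_max (ltW hm1) /=.
have : kappa t * v t w <= kappa t * (1 - p t w) by rewrite ler_pM2l.
nra.
Qed.

Lemma mp t : measurable_fun setT (p t).
Proof.
elim: t => [|t IH]; first exact: mp1.
rewrite /p /=.
apply: (measurable_maxr (f := cst pmin) (g := fun w => p t w + kappa t * v t w)).
  exact: measurable_cst.
apply: measurable_funD => //.
apply: measurable_funM => //; exact: measurable_cst.
Qed.

Lemma intB {g : T -> R} {K A} : measurable A -> measurable_fun setT g ->
  (forall w, `|g w| <= K) -> Pr.-integrable A (EFin \o g).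
Proof.
move=> mA mg hg; apply: measurable_bounded_integrable => //.
- by apply: (le_lt_trans (probability_le1 Pr mA)); rewrite ltry.
- exact: measurable_funS mg.
- rewrite /bounded_near; near=> K' => w _ /=; apply: (le_trans (hg w)); near: K'.
  by apply: nbhs_pinfty_ge; rewrite num_real.
Unshelve. all: by end_near.
Qed.

Lemma GsC {t A} : G t A -> G t (~` A).
Proof. by move=> h; rewrite -setTD; apply: sigma_algebraCD. Qed.

Lemma GsU {t A B} : G t A -> G t B -> G t (A `|` B).
Proof.
move=> hA hB.
have -> : A `|` B = \bigcup_n (fun n => if n is 0 then A else B) n.
  apply/seteqP; split => [w [hw|hw]|w [n _]]; first by exists 0%N.
    by exists 1%N.
  by case: n => /= [|n] hw; [left|right].
by apply: sigma_algebra_bigcup => -[|n].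
Qed.

Lemma GsI {t A B} : G t A -> G t B -> G t (A `&` B).
Proof.
move=> hA hB; rewrite -(setCK (A `&` B)) setCI.
by apply: GsC; apply: GsU; apply: GsC.
Qed.

Lemma GsT t : G t setT.
Proof. by rewrite -setC0; apply: GsC; apply: sigma_algebra0. Qed.

Lemma Gs_meas {t A} : G t A -> measurable A.
Proof.
apply: smallest_sub; first exact: sigma_algebra_measurable.
rewrite -bigcup_mkord_ord => X [i _] [B mB <-].
exact: (mp _ measurableT _ mB).
Qed.

Lemma Gs_pre t j B : (j <= t)%N -> measurable B -> G t (p j @^-1` B).
Proof.
move=> jt mB; apply: sub_sigma_algebra.
rewrite -bigcup_mkord_ord; exists j => //=.
by exists B => //; rewrite setTI inordK.
Qed.

Lemma Gs_mono {t t' A} : (t <= t')%N -> G t A -> G t' A.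
Proof.
move=> tt'; apply: smallest_sub; first exact: smallest_sigma_algebra.
rewrite -bigcup_mkord_ord => X [i /= hi] [B mB <-].
rewrite setTI inordK //; apply: Gs_pre => //.
by rewrite -ltnS (leq_trans hi).
Qed.


Let beta := beta_l l P rho2.
Let f (x : R) := expR (- (c * rho1) * x) - x * beta - x.
Variable pbr : R.
Hypotheses (hpbr : pmin <= pbr <= 1)
  (hmax : forall p, pmin <= p <= 1 -> U_l l P c rho1 rho2 p <= U_l l P c rho1 rho2 pbr).
Let e t w := p t w - pbr.
Let xi t w := v t w - f (p t w).

Lemma beta_ge0 : 0 <= beta.
Proof.
rewrite /beta /beta_l; apply: mulr_ge0; first exact: expR_ge0.
by apply: prodr_ge0 => k hkl; have := hP _ hkl; lra.
Qed.

Lemma drift x : pmin <= x <= 1 -> (x - pbr) * f x <= - (x - pbr) ^+ 2.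
Proof.
move=> hx.
have a0 : 0 < c * rho1 by apply: mulr_gt0.
have b0 := beta_ge0.
have hv := @var_ineq R (c * rho1) beta pbr (fun x => expR (- (c * rho1) * x)) f
  (U_l l P c rho1 rho2) pmin a0 b0 (ltW (proj1 (andP hpmin))) hpbr
  (fun _ => erefl) (fun _ => erefl) (fun _ => erefl) hmax x hx.
have mono : (x - pbr) * (expR (- (c * rho1) * x) - expR (- (c * rho1) * pbr)) <= 0.
  have [xp|xp] := leP x pbr.
    have : expR (- (c * rho1) * pbr) <= expR (- (c * rho1) * x).
      by rewrite ler_expR; nra.
    nra.
  have : expR (- (c * rho1) * x) <= expR (- (c * rho1) * pbr).
    by rewrite ler_expR; nra.
  nra.
have : f x = f pbr + (expR (- (c * rho1) * x) - expR (- (c * rho1) * pbr))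
   - (1 + beta) * (x - pbr) by rewrite /f; ring.
move=> ->.
move: hv mono; set F := f pbr; set D := (_ - expR _) => hv mono.
rewrite !expr2.
have : 0 <= beta * ((x - pbr) * (x - pbr)) by apply: mulr_ge0 => //; rewrite -expr2 sqr_ge0.
nra.
Qed.

Lemma f_bnd x : 0 <= x <= 1 -> `|f x| <= 2 + beta.
Proof.
move=> /andP[x0 x1]; have b0 := beta_ge0.
have E0 := expR_gt0 (- (c * rho1) * x).
have E1 : expR (- (c * rho1) * x) <= 1.
  rewrite expR_le1; have : 0 <= c * rho1 * x by apply: mulr_ge0 => //; apply: mulr_ge0; apply: ltW.
  lra.
rewrite ler_norml /f; apply/andP; split; nra.
Qed.

Lemma mf : measurable_fun setT f.
Proof.
apply: measurable_funB; first apply: measurable_funB.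
- apply: measurableT_comp; first exact: measurable_expR.
  apply: measurable_funM; [exact: measurable_cst | exact: measurable_id].
- apply: measurable_funM; [exact: measurable_id | exact: measurable_cst].
- exact: measurable_id.
Qed.

Lemma step t w : e t.+1 w ^+ 2 <= e t w ^+ 2 - 2 * kappa t * e t w ^+ 2
   + 2 * kappa t * (e t w * xi t w) + kappa t ^+ 2 * M ^+ 2.
Proof.
have /andP[hp0 hp1'] := p_bnd t w.
have := @clip_le R pmin pbr (p t w + kappa t * v t w) (proj1 (andP hpbr)).
rewrite -/(p t.+1) /= -/(e t.+1) => h.
apply: (le_trans h).
have hd := @drift _ (p_bnd t w).
have /andP[k0 k1] := hk t.
have : `|v t w| <= M by [].
rewrite ler_norml => /andP[vm vM].
have hv : v t w = f (p t w) + xi t w by rewrite /xi; ring.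
rewrite /e hv !expr2 in hd *.
have : kappa t * ((p t w - pbr) * f (p t w)) <= kappa t * (- ((p t w - pbr) * (p t w - pbr))).
  by apply: ler_wpM2l; lra.
have : (f (p t w) + xi t w) * (f (p t w) + xi t w) <= M * M.
  rewrite -hv; nra.
move=> h1 h2.
have : kappa t * kappa t * ((f (p t w) + xi t w) * (f (p t w) + xi t w)) <= kappa t * kappa t * (M * M).
  by apply: ler_wpM2l; nra.
nra.
Qed.


Hypothesis hcond : forall t (A : set T),
      g_sigma_preimage (fun i : 'I_t.+1 => proc pmin p1 kappa v i) A ->
      (\int[Pr]_(w in A) (v t w)%:E =
       \int[Pr]_(w in A)
         (expR (- (c * rho1) * proc pmin p1 kappa v t w)
          - proc pmin p1 kappa v t w * beta_l l P rho2
          - proc pmin p1 kappa v t w)%:E)%E.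

Let K := M + (2 + beta).

Lemma mfp t : measurable_fun setT (fun w => f (p t w)).
Proof. exact: measurableT_comp mf (mp t). Qed.

Lemma mxi t : measurable_fun setT (xi t).
Proof. by apply: measurable_funB => //; exact: mfp. Qed.

Lemma me t : measurable_fun setT (e t).
Proof. apply: measurable_funB; [exact: mp | exact: measurable_cst]. Qed.

Lemma fp_bnd t w : `|f (p t w)| <= 2 + beta.
Proof.
apply: f_bnd; have /andP[h1 h2] := p_bnd t w; case/andP: hpmin => h3 _.
by apply/andP; split => //; lra.
Qed.

Lemma xi_bnd t w : `|xi t w| <= K.
Proof.
rewrite /xi /K; apply: (le_trans (ler_normB _ _)).
by apply: lerD => //; exact: fp_bnd.
Qed.

Lemma e_bnd t w : `|e t w| <= 1.
Proof.
have /andP[h1 h2] := p_bnd t w; case/andP: hpbr => h3 h4; case/andP: hpmin => h5 _.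
by rewrite ler_norml /e; apply/andP; split; lra.
Qed.

Lemma xi_zero {t A} : G t A -> \int[Pr]_(w in A) xi t w = 0.
Proof.
move=> GA; have mA := Gs_meas GA.
rewrite /xi (RintegralB mA (intB mA (mv t) (hvM t)) (intB mA (mfp t) (fp_bnd t))).
by rewrite /Rintegral (hcond t A GA) subrr.
Qed.


Lemma patch_if (b : T -> bool) (g : T -> R) w :
  (g \_ [set x | b x]) w = if b w then g w else 0.
Proof.
rewrite /patch; case: (boolP (b w)) => hb; first by rewrite mem_set.
by rewrite memNset //; apply/negP.
Qed.

Lemma Pm_bnd {A} : measurable A -> 0 <= fine (Pr A) <= 1.
Proof.
move=> mA; have h1 := probability_le1 Pr mA; have h0 := measure_ge0 Pr A.
have hf : Pr A \is a fin_num by rewrite ge0_fin_numE // (le_lt_trans h1) // ltry.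
apply/andP; split; first exact: fine_ge0.
by rewrite -lee_fin fineK.
Qed.

Lemma Rint_sum A (g : nat -> T -> R) Kg m : measurable A ->
  (forall k, measurable_fun setT (g k)) -> (forall k w, `|g k w| <= Kg) ->
  [/\ measurable_fun setT (fun w => \sum_(k < m) g k w),
      (forall w, `|\sum_(k < m) g k w| <= m%:R * Kg) &
      \int[Pr]_(w in A) (\sum_(k < m) g k w) = \sum_(k < m) \int[Pr]_(w in A) g k w].
Proof.
move=> mA mg bg; elim: m => [|m [IH1 IH2 IH3]].
  have E : (fun w => \sum_(k < 0) g k w) = cst 0 by apply/funext => w; rewrite big_ord0.
  rewrite E big_ord0; split; first exact: measurable_cst.
    by move=> w; rewrite big_ord0 normr0 mul0r.
  by rewrite Rintegral_cst // mul0r.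
have E : (fun w => \sum_(k < m.+1) g k w) = (fun w => \sum_(k < m) g k w + g m w).
  by apply/funext => w; rewrite big_ord_recr.
rewrite E big_ord_recr /=; split.
- exact: measurable_funD.
- move=> w; rewrite big_ord_recr /=; apply: (le_trans (ler_normD _ _)).
  rewrite -[m.+1]addn1 natrD mulrDl mul1r; apply: lerD => //.
- rewrite RintegralD //; first by rewrite IH3.
  + exact: (intB mA IH1 IH2).
  + exact: (intB mA (mg m) (bg m)).
Qed.

Lemma orth {t A} : G t A -> \int[Pr]_(w in A) (e t w * xi t w) = 0.
Proof.
move=> GA; have mA := Gs_meas GA.
set I := \int[Pr]_(w in A) _.
suff H : forall n, (0 < n)%N -> `|I| <= K / n%:R.
  apply/eqP; rewrite -normr_le0 leNgt; apply/negP => I0.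
  pose n := (Num.trunc (K / `|I|)).+1.
  have hn := truncnS_gt (K / `|I|); rewrite -/n in hn.
  have n0 : (0 < n%:R :> R) by rewrite ltr0n.
  have := H n isT.
  rewrite ler_pdivlMr // mulrC -ler_pdivlMr // leNgt hn //.
move=> n n0.
set h := (n%:R : R)^-1.
have h0 : 0 < h by rewrite invr_gt0 ltr0n.
have hn1 : h * n%:R = 1 by rewrite mulVf // pnatr_eq0 -lt0n.
pose b k w := k.+1%:R * h <= p t w.
pose gk k w := if b k w then xi t w else 0.
have mb : forall k, measurable_fun setT (b k).
  move=> k; apply: measurable_fun_ler; [exact: measurable_cst | exact: mp].
have mgk : forall k, measurable_fun setT (gk k).
  move=> k; apply: measurable_fun_ifT; [exact: mb | exact: mxi | exact: measurable_cst].
have bgk : forall k w, `|gk k w| <= K.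
  move=> k w; rewrite /gk; case: ifP => _; first exact: xi_bnd.
  by rewrite normr0; apply: le_trans (xi_bnd t w); exact: normr_ge0.
have [mS bS iS] := @Rint_sum A gk K n mA mgk bgk.
set S := fun w => \sum_(k < n) gk k w.
have zk : forall k : 'I_n, \int[Pr]_(w in A) gk k w = 0.
  move=> k.
  have GC : G t (A `&` [set w | b k w]).
    apply: GsI => //.
    have -> : [set w | b k w] = p t @^-1` `[k.+1%:R * h, +oo[.
      by apply/seteqP; split => w /=; rewrite in_itv /= andbT.
    apply: Gs_pre => //; exact: measurable_itv.
  rewrite -(xi_zero GC) Rintegral_mkcondr; apply: eq_Rintegral => w _.
  by rewrite patch_if.
have iS0 : \int[Pr]_(w in A) S w = 0.
  by rewrite /S iS big1 // => k _; exact: zk.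
pose cnt w := \sum_(k < n) (if k.+1%:R * h <= p t w then 1 else 0 : R).
have Scnt : forall w, S w = xi t w * cnt w.
  move=> w; rewrite /S /cnt mulr_sumr; apply: eq_bigr => k _.
  by rewrite /gk /b; case: ifP; rewrite ?mulr1 ?mulr0.
pose D w := xi t w * p t w - h * S w.
have mD : measurable_fun setT D.
  apply: measurable_funB; first by apply: measurable_funM; [exact: mxi|exact: mp].
  by apply: measurable_funM => //; exact: measurable_cst.
have bD : forall w, `|D w| <= K * h.
  move=> w; rewrite /D Scnt.
  have /andP[pw0 pw1] := p_bnd t w; case/andP: hpmin => hm0 _.
  have [c1 c2 c3] := @count_bnd R h (p t w) n h0 (ltW (lt_le_trans hm0 pw0)).
  rewrite -/(cnt w) in c1 c2 c3.
  have hc : `|p t w - h * cnt w| <= h.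
    rewrite ler_norml; apply/andP; split; first lra.
    case: c3 => c3; first lra.
    by rewrite c3 hn1; lra.
  rewrite (_ : xi t w * p t w - h * (xi t w * cnt w) = xi t w * (p t w - h * cnt w)); last by ring.
  rewrite normrM; apply: ler_pM => //; exact: xi_bnd.
have mxp : measurable_fun setT (fun w => xi t w * p t w).
  by apply: measurable_funM; [exact: mxi|exact: mp].
have bxp : forall w, `|xi t w * p t w| <= K * 1.
  move=> w; rewrite normrM; apply: ler_pM => //; first exact: xi_bnd.
  have /andP[pw0 pw1] := p_bnd t w; case/andP: hpmin => hm0 _.
  rewrite ger0_norm //; lra.
have mhS : measurable_fun setT (fun w => h * S w).
  by apply: measurable_funM => //; exact: measurable_cst.
have bhS : forall w, `|h * S w| <= h * (n%:R * K).
  by move=> w; rewrite normrM (gtr0_norm h0); apply: ler_wpM2l => //; [lra|exact: bS].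
have mpx : measurable_fun setT (fun w => pbr * xi t w).
  by apply: measurable_funM; [exact: measurable_cst | exact: mxi].
have bpx : forall w, `|pbr * xi t w| <= 1 * K.
  move=> w; rewrite normrM; apply: ler_pM => //; last exact: xi_bnd.
  case/andP: hpbr => h1 h2; case/andP: hpmin => h3 _; rewrite ger0_norm; lra.
have eI : I = \int[Pr]_(w in A) (D w + (h * S w - pbr * xi t w)).
  rewrite /I; apply: eq_Rintegral => w _; rewrite /D /e; ring.
have mHS : measurable_fun setT (fun w => h * S w - pbr * xi t w) by exact: measurable_funB.
have bHS : forall w, `|h * S w - pbr * xi t w| <= h * (n%:R * K) + 1 * K.
  move=> w; apply: (le_trans (ler_normB _ _)); exact: lerD.
rewrite eI RintegralD //; last 2 first.
- exact: (intB mA mD bD).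
- exact: (intB mA mHS bHS).
rewrite [X in `|_ + X| <= _](RintegralB mA (intB mA mhS bhS) (intB mA mpx bpx)).
rewrite [X in `|_ + (X - _)| <= _](RintegralZl _ mA (intB mA mS bS)).
rewrite [X in `|_ + (_ - X)| <= _](RintegralZl _ mA (intB mA (mxi t) (xi_bnd t))).
rewrite iS0 (xi_zero GA) !mulr0 subrr addr0.
apply: (le_trans (le_normr_Rintegral mA (intB mA mD bD))).
have iK : Pr.-integrable A (EFin \o (fun _ : T => K * h)).
  apply: (intB (K := `|K * h|) mA) => //; exact: measurable_cst.
apply: (le_trans (le_Rintegral mA (integrable_norm (intB mA mD bD)) iK _)).
  by move=> w _ /=; exact: bD.
rewrite Rintegral_cst //; apply: ler_piMr.
  by apply: mulr_ge0; [exact: (le_trans (normr_ge0 _) (xi_bnd t point)) | exact: ltW].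
by have /andP[] := Pm_bnd mA.
Qed.


Let Y t w := e t w ^+ 2.

Lemma mY t : measurable_fun setT (Y t).
Proof. exact: measurable_funX (me t). Qed.

Lemma Y_bnd t w : `|Y t w| <= 1.
Proof.
rewrite /Y normrX; have := e_bnd t w; have := normr_ge0 (e t w).
move: `|e t w| => x x0 x1; rewrite expr2; nra.
Qed.

Lemma Y_ge0 t w : 0 <= Y t w.
Proof. exact: sqr_ge0. Qed.

Lemma super {t A} : G t A -> \int[Pr]_(w in A) Y t.+1 w <=
  (1 - 2 * kappa t) * \int[Pr]_(w in A) Y t w + kappa t ^+ 2 * M ^+ 2 * fine (Pr A).
Proof.
move=> GA; have mA := Gs_meas GA.
pose g w := (1 - 2 * kappa t) * Y t w + 2 * kappa t * (e t w * xi t w) + kappa t ^+ 2 * M ^+ 2.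
have mex : measurable_fun setT (fun w => e t w * xi t w).
  by apply: measurable_funM; [exact: me | exact: mxi].
have bex : forall w, `|e t w * xi t w| <= 1 * K.
  by move=> w; rewrite normrM; apply: ler_pM => //; [exact: e_bnd | exact: xi_bnd].
have m1 : measurable_fun setT (fun w => (1 - 2 * kappa t) * Y t w).
  by apply: measurable_funM; [exact: measurable_cst | exact: mY].
have b1 : forall w, `|(1 - 2 * kappa t) * Y t w| <= `|1 - 2 * kappa t| * 1.
  by move=> w; rewrite normrM; apply: ler_pM => //; exact: Y_bnd.
have m2 : measurable_fun setT (fun w => 2 * kappa t * (e t w * xi t w)).
  by apply: measurable_funM; [exact: measurable_cst | exact: mex].
have b2 : forall w, `|2 * kappa t * (e t w * xi t w)| <= `|2 * kappa t| * (1 * K).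
  by move=> w; rewrite normrM; apply: ler_pM => //; exact: bex.
have m12 : measurable_fun setT (fun w => (1 - 2 * kappa t) * Y t w + 2 * kappa t * (e t w * xi t w)).
  exact: measurable_funD.
have b12 : forall w, `|(1 - 2 * kappa t) * Y t w + 2 * kappa t * (e t w * xi t w)| <=
    `|1 - 2 * kappa t| * 1 + `|2 * kappa t| * (1 * K).
  by move=> w; apply: (le_trans (ler_normD _ _)); apply: lerD.
have mg : measurable_fun setT g by apply: measurable_funD => //; exact: measurable_cst.
have bg : forall w, `|g w| <= `|1 - 2 * kappa t| * 1 + `|2 * kappa t| * (1 * K)
    + `|kappa t ^+ 2 * M ^+ 2|.
  by move=> w; apply: (le_trans (ler_normD _ _)); apply: lerD.
apply: (le_trans (le_Rintegral mA (intB mA (mY t.+1) (Y_bnd t.+1)) (intB mA mg bg) _)).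
  by move=> w _; rewrite /g /Y; have := step t w; rewrite -/(e t w) -/(e t.+1 w); lra.
rewrite /g (RintegralD mA (intB mA m12 b12)); last first.
  by apply: (intB (K := `|kappa t ^+ 2 * M ^+ 2|) mA) => //; exact: measurable_cst.
rewrite (RintegralD mA (intB mA m1 b1) (intB mA m2 b2)).
rewrite (RintegralZl _ mA (intB mA (mY t) (Y_bnd t))).
rewrite (RintegralZl _ mA (intB mA mex bex)).
by rewrite (orth GA) mulr0 addr0 Rintegral_cst.
Qed.


Hypotheses (hS : (fun n => \sum_(k < n) kappa k) @ \oo --> +oo)
  (hS2 : cvg ((fun n => \sum_(k < n) kappa k ^+ 2) @ \oo)).
Let S n := \sum_(k < n) kappa k.
Let S2 n := \sum_(k < n) kappa k ^+ 2.
Let y t := \int[Pr]_(w in setT) Y t w.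

Lemma y_ge0 t : 0 <= y t.
Proof. by apply: Rintegral_ge0 => w _; exact: Y_ge0. Qed.

Lemma y_step t : y t.+1 <= (1 - 2 * kappa t) * y t + kappa t ^+ 2 * M ^+ 2.
Proof. by have := super (GsT t); rewrite probability_setT /= mulr1. Qed.

Lemma S2_nd : {homo S2 : n m / (n <= m)%N >-> n <= m}.
Proof.
by apply/nondecreasing_seqP => n; rewrite /S2 big_ord_recr /= lerDl sqr_ge0.
Qed.

Lemma S2_le n : S2 n <= limn S2.
Proof. exact: nondecreasing_cvgn_le S2_nd hS2 n. Qed.

Lemma S2_ge0 n : 0 <= S2 n.
Proof. by apply: sumr_ge0 => k _; exact: sqr_ge0. Qed.

Lemma tail eta : 0 < eta -> exists m0, forall m k, (m0 <= m)%N -> S2 (m + k) - S2 m <= eta.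
Proof.
move=> e0; have := hS2; move/cvgrPdist_lt => /(_ eta e0) [m0 _ Hm0].
exists m0 => m k hm; have := Hm0 m hm; rewrite /= => h1.
have := S2_le (m + k); have := ler_norm (limn S2 - S2 m); lra.
Qed.

Lemma y_liminf dl m : 0 < dl -> exists t, (m <= t)%N /\ y t < dl.
Proof.
move=> d0.
suff : ~ (forall t, (m <= t)%N -> dl <= y t).
  move=> H; apply: contrapT => H2; apply: H => t ht; rewrite leNgt; apply/negP => yt.
  by apply: H2; exists t; split.
move=> H.
have claim : forall k, y (m + k) + 2 * dl * (S (m + k) - S m) <= y m + M ^+ 2 * (S2 (m + k) - S2 m).
  elim=> [|k IH]; first by rewrite addn0 !subrr !mulr0 !addr0.
  rewrite addnS.
  have h1 := y_step (m + k); have h2 := H (m + k) (leq_addr _ _).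
  have /andP[k0 k1] := hk (m + k).
  have eS : S (m + k).+1 = S (m + k) + kappa (m + k) by rewrite /S big_ord_recr.
  have eS2 : S2 (m + k).+1 = S2 (m + k) + kappa (m + k) ^+ 2 by rewrite /S2 big_ord_recr.
  rewrite eS eS2.
  have : kappa (m + k) * dl <= kappa (m + k) * y (m + k) by apply: ler_wpM2l; lra.
  nra.
pose C := limn S2.
pose A := S m + (y m + M ^+ 2 * C) / (2 * dl) + 1.
have := hS; move/cvgryPge => /(_ A) [N0 _ HN].
have hA := HN (m + N0)%N (leq_addl _ _); rewrite /= -/(S (m + N0)) in hA.
have := claim N0; have := y_ge0 (m + N0); have := S2_le (m + N0); have := S2_ge0 m.
rewrite -/C => s2m s2c yg cl.
have hM : 0 <= M ^+ 2 by exact: sqr_ge0.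
have : 2 * dl * (S (m + N0) - S m) <= y m + M ^+ 2 * C.
  have : M ^+ 2 * (S2 (m + N0) - S2 m) <= M ^+ 2 * C by apply: ler_wpM2l => //; lra.
  lra.
rewrite -ler_pdivlMl; last lra.
rewrite /A in hA; rewrite mulrC; lra.
Qed.


Let D j (r : R) := [set w | `|e j w| < r].
Let Bk m r k := [set w | forall i, (i < k)%N -> `|e (m + i) w| < r].

Lemma GD j r : G j (D j r).
Proof.
have -> : D j r = p j @^-1` `]pbr - r, pbr + r[.
  apply/seteqP; split => w /=; rewrite /D /e /= in_itv /= distrC ltr_distlC //.
apply: Gs_pre => //; exact: measurable_itv.
Qed.

Lemma Bk0 m r : Bk m r 0 = setT.
Proof. by apply/seteqP; split => w // _ i. Qed.

Lemma BkS m r k : Bk m r k.+1 = Bk m r k `&` D (m + k) r.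
Proof.
apply/seteqP; split => w /=.
  move=> H; split; last exact: H.
  by move=> i hi; apply: H; exact: ltnW.
move=> [H1 H2] i; rewrite ltnS leq_eqVlt => /orP[/eqP->//|]; exact: H1.
Qed.

Lemma GB m r k : G (m + k) (Bk m r k.+1).
Proof.
elim: k => [|k IH].
  by rewrite BkS Bk0 setTI addn0; exact: GD.
rewrite BkS addnS; apply: GsI; last exact: GD.
exact: (Gs_mono (leqnSn _) IH).
Qed.

Lemma mBk m r k : measurable (Bk m r k).
Proof. by case: k => [|k]; [rewrite Bk0 | exact: Gs_meas (GB m r k)]. Qed.

Lemma Pr_fin {A} : measurable A -> Pr A \is a fin_num.
Proof.
move=> mA; rewrite ge0_fin_numE //.
by rewrite (le_lt_trans (probability_le1 Pr mA)) // ltry.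
Qed.

Lemma Pm_U {X Z} : measurable X -> measurable Z -> X `&` Z = set0 ->
  fine (Pr (X `|` Z)) = fine (Pr X) + fine (Pr Z).
Proof. by move=> mX mZ XZ; rewrite measureU // fineD //; exact: Pr_fin. Qed.

Lemma maximal m r k : 0 < r ->
  r ^+ 2 * fine (Pr (~` Bk m r k)) + \int[Pr]_(w in Bk m r k) Y (m + k) w
  <= y m + M ^+ 2 * (S2 (m + k) - S2 m).
Proof.
move=> r0; elim: k => [|k IH].
  by rewrite Bk0 setCT measure0 /= mulr0 add0r addn0 subrr mulr0 addr0.
set j := (m + k)%N in IH *.
set A := Bk m r k in IH *.
have mA : measurable A by exact: mBk.
have mDj : measurable (D j r) by exact: Gs_meas (GD j r).
set A' := A `&` ~` D j r.
have mA' : measurable A' by apply: measurableI => //; exact: measurableC.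
have eBn : Bk m r k.+1 = A `&` D j r by rewrite BkS.
have mBn : measurable (A `&` D j r) by exact: measurableI.
have eA : A = A' `|` (A `&` D j r).
  apply/seteqP; split => w.
    by move=> hA; have [hD|hD] := pselect (D j r w); [right|left].
  by case=> -[].
have dis : [disjoint A' & A `&` D j r].
  by apply/disj_set2P; apply/seteqP; split => w // -[[_ h1] [_ h2]].
have iA := intB mA (mY j) (Y_bnd j).
have split_int : \int[Pr]_(w in A) Y j w =
    \int[Pr]_(w in A') Y j w + \int[Pr]_(w in A `&` D j r) Y j w.
  by rewrite {1}eA Rintegral_setU // -eA.
have low : r ^+ 2 * fine (Pr A') <= \int[Pr]_(w in A') Y j w.
  rewrite -[X in X <= _](Rintegral_cst Pr mA').
  apply: le_Rintegral => //.
  - by apply: (intB (K := `|r ^+ 2|) mA') => //; exact: measurable_cst.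
  - exact: intB mA' (mY j) (Y_bnd j).
  - move=> w [_ hw]; rewrite /Y -(real_normK (num_real (e j w))).
    have : r <= `|e j w| by rewrite leNgt; apply/negP.
    by move=> h; rewrite !expr2; nra.
have sup := super (GB m r k); rewrite eBn in sup.
have /andP[k0 k1] := hk j.
have I0 : 0 <= \int[Pr]_(w in A `&` D j r) Y j w.
  by apply: Rintegral_ge0 => w _; exact: Y_ge0.
have /andP[pb0 pb1] := Pm_bnd mBn.
have eC : ~` Bk m r k.+1 = ~` A `|` A'.
  rewrite eBn setCI; apply/seteqP; split => w.
    by case=> h; [left | have [hA|hA] := pselect (A w); [right|left]].
  by case=> [h|[_ h]]; [left|right].
have eCd : ~` A `&` A' = set0 by apply/seteqP; split => w // -[h1 [h2 _]].
rewrite eC (Pm_U (measurableC mA) mA' eCd) eBn addnS.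
have eS2 : S2 j.+1 = S2 j + kappa j ^+ 2 by rewrite /S2 big_ord_recr.
rewrite eS2.
have hM : 0 <= M ^+ 2 by exact: sqr_ge0.
have t1 : kappa j ^+ 2 * M ^+ 2 * fine (Pr (A `&` D j r)) <= kappa j ^+ 2 * M ^+ 2.
  by apply: ler_piMr => //; apply: mulr_ge0 => //; exact: sqr_ge0.
have t2 : (1 - 2 * kappa j) * \int[Pr]_(w in A `&` D j r) Y j w <=
   \int[Pr]_(w in A `&` D j r) Y j w by nra.
have t3 : M ^+ 2 * (S2 j + kappa j ^+ 2 - S2 m) = M ^+ 2 * (S2 j - S2 m) + kappa j ^+ 2 * M ^+ 2 by ring.
rewrite t3; lra.
Qed.


Lemma tailL eta : 0 < eta -> exists m0, forall m, (m0 <= m)%N -> limn S2 - S2 m <= eta.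
Proof.
move=> e0; have := hS2; move/cvgrPdist_lt => /(_ eta e0) [m0 _ Hm0].
exists m0 => m hm; have := Hm0 m hm; rewrite /= => h1.
have := ler_norm (limn S2 - S2 m); lra.
Qed.

Lemma ae_r r : 0 < r ->
  \forall w \ae Pr, exists m, forall i, (m <= i)%N -> `|e i w| < r.
Proof.
move=> r0.
pose U m := \bigcup_k ~` Bk m r k.
pose Ns := \bigcap_m U m.
have mU : forall m, measurable (U m).
  by move=> m; apply: bigcupT_measurable => k; apply: measurableC; exact: mBk.
have mNs : measurable Ns by apply: bigcapT_measurable => m; exact: mU.
have r2 : 0 < r ^+ 2 by rewrite exprn_gt0.
pose L := limn S2.
pose b m := (y m + M ^+ 2 * (L - S2 m)) / r ^+ 2.
have hb : forall m, (Pr Ns <= (b m)%:E)%E.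
  move=> m.
  apply: (@le_trans _ _ (Pr (U m))).
    by apply: le_measure; rewrite ?inE // => w hw; exact: hw m I.
  have cv : (Pr \o (fun k => ~` Bk m r k)) @ \oo --> Pr (U m).
    apply: nondecreasing_cvg_mu.
    - by move=> k; apply: measurableC; exact: mBk.
    - exact: mU.
    - move=> n n' nn'; apply/subsetPset => w /= h1 h2; apply: h1 => i hi.
      by apply: h2; exact: leq_trans hi nn'.
  rewrite -(cvg_lim _ cv) //; apply: lime_le; first exact: cvgP cv.
  apply: nearW => k /=.
  have := maximal m r k r0.
  have := @Rintegral_ge0 _ _ _ Pr (Bk m r k) (Y (m + k)) (fun w _ => Y_ge0 (m + k) w).
  have := S2_le (m + k).
  have hM : 0 <= M ^+ 2 by exact: sqr_ge0.
  move=> s1 i0 mx; rewrite -/L in s1.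
  rewrite -(fineK (Pr_fin (measurableC (mBk m r k)))) lee_fin.
  rewrite /b ler_pdivlMr // mulrC.
  have : M ^+ 2 * (S2 (m + k) - S2 m) <= M ^+ 2 * (L - S2 m).
    by apply: ler_wpM2l => //; lra.
  lra.
have hfin : Pr Ns \is a fin_num by exact: Pr_fin.
have x0 : 0 <= fine (Pr Ns) by apply: fine_ge0.
have xle : forall dl, 0 < dl -> fine (Pr Ns) <= dl.
  move=> dl d0.
  have hM : 0 <= M ^+ 2 by exact: sqr_ge0.
  pose eta := dl * r ^+ 2 / (2 * (M ^+ 2 + 1)).
  have eta0 : 0 < eta by apply: divr_gt0; [apply: mulr_gt0 | lra].
  have [m0 Hm0] := tailL eta eta0.
  have [t [ht yt]] := y_liminf (dl * r ^+ 2 / 2) m0 (divr_gt0 (mulr_gt0 d0 r2) (ltr0n _ 2)).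
  have := hb t; rewrite -(fineK hfin) lee_fin => hx.
  apply: (le_trans hx); rewrite /b ler_pdivrMr //.
  have hL := Hm0 t ht; rewrite -/L in hL.
  have h1 : M ^+ 2 * (L - S2 t) <= M ^+ 2 * eta by apply: ler_wpM2l.
  have e1 : M ^+ 2 * eta = (dl * r ^+ 2 / 2) * (M ^+ 2 / (M ^+ 2 + 1)).
    rewrite /eta; field; lra.
  have e2 : M ^+ 2 / (M ^+ 2 + 1) <= 1 by rewrite ler_pdivrMr; lra.
  have h2 : M ^+ 2 * eta <= dl * r ^+ 2 / 2.
    rewrite e1; apply: ler_piMr => //; apply: divr_ge0; [|lra].
    by apply: mulr_ge0; [lra | exact: ltW].
  lra.
have x00 : fine (Pr Ns) = 0.
  apply/eqP; rewrite eq_le x0 andbT leNgt; apply/negP => hpos.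
  have := xle _ (divr_gt0 hpos (ltr0n _ 2)); lra.
exists Ns; split => //.
  by rewrite -(fineK hfin) x00.
move=> w /= hw m _; apply: contrapT => hU; apply: hw; exists m => i hi.
rewrite ltNge; apply/negP => hge; apply: hU.
exists (i - m)%N.+1 => //= h; have := h (i - m)%N (ltnSn _); rewrite subnKC //.
by rewrite ltNge hge.
Qed.


Lemma final : \forall w \ae Pr, (fun t => proc pmin p1 kappa v t w) @ \oo --> pbr.
Proof.
have H : forall n, \forall w \ae Pr,
    exists m, forall i, (m <= i)%N -> `|e i w| < n.+1%:R^-1.
  by move=> n; apply: ae_r; rewrite invr_gt0 ltr0n.
apply: filterS (ae_foralln H) => w Hw.
apply/cvgrPdist_lt => eps e0.
pose n := Num.trunc (eps^-1).
have hn := truncnS_gt (eps^-1); rewrite -/n in hn.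
have hn' : n.+1%:R^-1 < eps.
  by rewrite -[X in _ < X](invrK eps) ltf_pV2 ?posrE ?invr_gt0 ?ltr0n.
have [m Hm] := Hw n.
exists m => // i /= hi.
by rewrite distrC; apply: lt_trans (Hm i hi) hn'.
Qed.

End Main.

Theorem theorem6 (R : realType) (d : measure_display) (T : measurableType d)
  (Pr : probability T R)
  (N : nat) (l : 'I_N) (P : 'I_N -> R) (c rho1 rho2 pmin M : R)
  (p1 : T -> R) (v : nat -> T -> R) (kappa : nat -> R) :
  0 < c -> 0 < rho1 -> 0 < rho2 -> 0 < pmin < 1 ->
  (forall k, k != l -> 0 <= P k <= 1) ->
  measurable_fun setT p1 ->
  (forall w, pmin <= p1 w <= 1) ->
  (forall t, measurable_fun setT (v t)) ->
  (forall t w, `|v t w| <= M) ->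
  (forall t w, v t w <= 1 - proc pmin p1 kappa v t w) ->
  (* E{ v(t) | p(1), ..., p(t) } = e^{-alpha p(t)} - p(t) beta - p(t) *)
  (forall t (A : set T),
      g_sigma_preimage (fun i : 'I_t.+1 => proc pmin p1 kappa v i) A ->
      (\int[Pr]_(w in A) (v t w)%:E =
       \int[Pr]_(w in A)
         (expR (- (c * rho1) * proc pmin p1 kappa v t w)
          - proc pmin p1 kappa v t w * beta_l l P rho2
          - proc pmin p1 kappa v t w)%:E)%E) ->
  (forall t, 0 < kappa t <= 1) ->
  (fun n => \sum_(k < n) kappa k) @ \oo --> +oo ->
  cvg ((fun n => \sum_(k < n) kappa k ^+ 2) @ \oo) ->
  forall pbr : R,
    pmin <= pbr <= 1 ->
    (forall p, pmin <= p <= 1 -> U_l l P c rho1 rho2 p <= U_l l P c rho1 rho2 pbr) ->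
    {ae Pr, forall w, (fun t => proc pmin p1 kappa v t w) @ \oo --> pbr}.
Proof.
move=> c0 r10 r20 hpmin hP mp1 hp1 mv hvM hv1 hcond hk hS hS2 pbr hpbr hmax.
exact: (@final R d T Pr N l P c rho1 rho2 pmin M p1 v kappa c0 r10 hpmin hP mp1 hp1 mv hvM hv1 hk pbr hpbr hmax hcond hS hS2).
Qed.
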